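(* If $0\le p\le t=\frac12$, then bold play is optimal, i.e. $\pi(p,\frac12)=p+(1-p)p$, attained by $c_1=c_2=\frac12$, $c_i=0$ for $i\ge3$.
   Context: Let $\beta_1,\beta_2,\ldots$ be independent Bernoulli random variables with success probability $p$. A stake sequence is a sequence $\gamma=(c_1,c_2,\ldots)$ of non-negative reals with $c_1\ge c_2\ge\cdots$ and $\sum_i c_i=1$; write $S_\gamma=\sum_i c_i\beta_i$. For $0\le p\le t\le 1$ define $\pi(p,t)=\sup\{\mathbf P(S_\gamma\ge t)\mid \gamma \text{ a stake sequence}\}$. Bold play for threshold $t$ is the stake sequence with $c_i=\frac1m$ for $i\le m$ and $c_i=0$ for $i>m$, where $m=\lfloor 1/t\rfloor$; it is optimal if it attains $\pi(p,t)$. *)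

(* Defs.v *)
From HB Require Import structures.
From mathcomp Require Import all_boot all_order all_algebra.
From mathcomp Require Import all_classical all_reals all_analysis.
Set Implicit Arguments. Unset Strict Implicit. Unset Printing Implicit Defensive.
Import Order.TTheory GRing.Theory Num.Theory.
Import numFieldNormedType.Exports.
Local Open Scope classical_set_scope.
Local Open Scope ring_scope.

(* Indices start at 0: the paper's c_1, c_2, ... are c 0, c 1, ... *)

Definition bernoulli_seq (R : realType) (d : measure_display)
  (T : measurableType d) (P : probability T R) (p : R) (beta : nat -> T -> R)
  : Prop :=
  (forall i, measurable_fun setT (beta i)) /\
  forall (s : seq nat) (b : nat -> bool), uniq s ->
    P (\bigcap_(i in [set` s]) [set w | beta i w = (b i)%:R]) =
    (\prod_(i <- s) (if b i then p else 1 - p))%:E.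

Definition stake_seq (R : realType) (c : nat -> R) : Prop :=
  (forall i, 0 <= c i) /\ (forall i, c i.+1 <= c i) /\
  (series c @ \oo --> (1 : R)).

Definition S_gamma (R : realType) (T : Type) (c : nat -> R)
  (beta : nat -> T -> R) (w : T) : R :=
  limn (series (fun i => c i * beta i w)).

Definition pi_val (R : realType) (d : measure_display) (T : measurableType d)
  (P : probability T R) (beta : nat -> T -> R) (t : R) : \bar R :=
  ereal_sup [set P [set w | t <= S_gamma c beta w] | c in @stake_seq R].

Definition bold_play (R : realType) (t : R) : nat -> R :=
  fun i => if (i < Num.truncn t^-1)%N then ((Num.truncn t^-1)%:R)^-1 else 0.

(* Main.v *)
From HB Require Import structures.
From mathcomp Require Import all_boot all_order all_algebra.
From mathcomp Require Import all_classical all_reals all_analysis.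
From mathcomp Require Import ring lra.
Require Import Defs.
Set Implicit Arguments. Unset Strict Implicit. Unset Printing Implicit Defensive.
Import Order.TTheory GRing.Theory Num.Theory.
Import numFieldNormedType.Exports.
Local Open Scope classical_set_scope.
Local Open Scope ring_scope.
Fixpoint Qf (R : realType) (p : R) (cs : seq R) (t : R) : R :=
  match cs with
  | [::] => if t <= 0 then 1 else 0
  | w :: cs' => p * Qf p cs' (t - w) + (1 - p) * Qf p cs' t
  end.

Lemma Qf_bnd (R : realType) (p : R) cs t : 0 <= p <= 1 ->
  0 <= Qf p cs t <= 1.
Proof.
move=> /andP[p0 p1]; elim: cs t => [|w cs IH] t /=; first by case: ifP => _; apply/andP; split; lra.
have /andP[a0 a1] := IH (t - w); have /andP[b0 b1] := IH t.
apply/andP; split; nra.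
Qed.

Lemma Qf_anti (R : realType) (p : R) cs t t' : 0 <= p <= 1 -> t <= t' ->
  Qf p cs t' <= Qf p cs t.
Proof.
move=> /andP[p0 p1]; elim: cs t t' => [|w cs IH] t t' tt' /=.
  case: ifP => [h|_]; last by case: ifP.
  by rewrite ifT //; apply: le_trans h.
have h1 := IH (t - w) (t' - w) ltac:(lra). have h2 := IH t t' tt'.
nra.
Qed.

Lemma Qf_main (R : realType) (p : R) cs : 0 <= p -> p <= 1/2 ->
  all (fun x => 0 <= x) cs ->
  forall t1 t2, t1 <= t2 -> \sum_(x <- cs) x < t1 + t2 ->
  p * Qf p cs t1 + (1 - p) * Qf p cs t2 <= p.
Proof.
move=> p0 p2; have p01 : 0 <= p <= 1 by apply/andP; split; lra.
elim: cs => [|w cs IH] /=.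
  move=> _ t1 t2 t12; rewrite big_nil => h.
  rewrite [X in (1 - p) * X]ifF; last by apply/negbTE; rewrite -ltNge; lra.
  by case: ifP => _; lra.
move=> /andP[w0 csp] t1 t2 t12; rewrite big_cons => hs.
have := @Qf_bnd R p cs (t1 - w) p01; have := @Qf_bnd R p cs t1 p01.
have := @Qf_bnd R p cs (t2 - w) p01; have := @Qf_bnd R p cs t2 p01.
move=> /andP[e0 e1] /andP[c0 c1] /andP[b0 b1] /andP[a0 a1].
have H1 := IH csp (t1 - w) t2 ltac:(lra) ltac:(lra).
have [h|h] := lerP t1 (t2 - w).
  have H2 := IH csp t1 (t2 - w) h ltac:(lra).
  have m := @Qf_anti R p cs _ _ p01 (ltac:(lra) : t2 - w <= t2).
  have K1 : 0 <= p * (p - (p * Qf p cs (t1 - w) + (1 - p) * Qf p cs t2)).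
    by apply: mulr_ge0; lra.
  have K2 : 0 <= (1 - p) * (p - (p * Qf p cs t1 + (1 - p) * Qf p cs (t2 - w))).
    by apply: mulr_ge0; lra.
  have K3 : 0 <= ((1 - p) * (1 - 2 * p)) * (Qf p cs (t2 - w) - Qf p cs t2).
    by apply: mulr_ge0; [apply: mulr_ge0|]; lra.
  nra.
have H2 := IH csp (t2 - w) t1 ltac:(lra) ltac:(lra).
have m := @Qf_anti R p cs _ _ p01 t12.
have K1 : 0 <= p * (p - (p * Qf p cs (t1 - w) + (1 - p) * Qf p cs t2)).
  by apply: mulr_ge0; lra.
have K2 : 0 <= (1 - p) * (p - (p * Qf p cs (t2 - w) + (1 - p) * Qf p cs t1)).
  by apply: mulr_ge0; lra.
have K3 : 0 <= ((1 - p) * (1 - 2 * p)) * (Qf p cs t1 - Qf p cs t2).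
  by apply: mulr_ge0; [apply: mulr_ge0|]; lra.
nra.
Qed.

Definition wt (R : realType) (p : R) (x : bool) : R := if x then p else 1 - p.

Definition Cyl (R : realType) (T : Type) (beta : nat -> T -> R) (ks : seq nat)
  (b : nat -> bool) : set T :=
  \bigcap_(i in [set` ks]) [set w | beta i w = (b i)%:R].

Definition Cnd (R : realType) (T : Type) (c : nat -> R) (beta : nat -> T -> R)
  (js : seq nat) (t : R) : set T :=
  (\bigcap_(j in [set` js]) [set w | beta j w = 0 \/ beta j w = 1]) `&`
  [set w | t <= \sum_(j <- js) c j * beta j w].

Lemma mpre (R : realType) d (T : measurableType d) (f : T -> R) (Y : set R) :
  measurable_fun setT f -> measurable Y -> measurable (f @^-1` Y).
Proof. by move=> mf mY; rewrite -[_ @^-1` _]setTI; exact: mf. Qed.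

Lemma mle (R : realType) d (T : measurableType d) (f : T -> R) t :
  measurable_fun setT f -> measurable [set w | t <= f w].
Proof.
move=> mf; have := measurable_fun_le measurableT (measurable_cst t) mf.
by rewrite setTI.
Qed.

Lemma mCyl (R : realType) d (T : measurableType d) (beta : nat -> T -> R) ks b :
  (forall i, measurable_fun setT (beta i)) -> measurable (Cyl beta ks b).
Proof.
move=> mb; apply: bigcap_measurableType => k _.
exact: (mpre (mb k) (measurable_set1 _)).
Qed.

Lemma mCnd (R : realType) d (T : measurableType d) (beta : nat -> T -> R) c js t :
  (forall i, measurable_fun setT (beta i)) -> measurable (Cnd c beta js t).
Proof.
move=> mb; apply: measurableI.
  apply: bigcap_measurableType => k _; apply: measurableU.
    exact: (mpre (mb k) (measurable_set1 _)).
  exact: (mpre (mb k) (measurable_set1 _)).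
apply: mle; apply: measurable_sum => j; exact: measurable_realfun.measurable_funM.
Qed.

Lemma bridge (R : realType) d (T : measurableType d) (P : probability T R) p
  (beta : nat -> T -> R) (c : nat -> R) : bernoulli_seq P p beta ->
  forall js ks b t, uniq (ks ++ js) ->
  P (Cyl beta ks b `&` Cnd c beta js t) =
  ((\prod_(k <- ks) wt p (b k)) * Qf p (map c js) t)%:E.
Proof.
move=> [mb hb]; elim => [|j js IH] ks b t u.
  rewrite cats0 in u; rewrite /=.
  case: (lerP t 0) => ht.
    rewrite (_ : _ `&` _ = Cyl beta ks b); last first.
      apply/seteqP; split => w; first by case.
      move=> h; split => //; split => //=.
      by rewrite big_nil.
    by rewrite mulr1; exact: (hb ks b u).
  rewrite (_ : _ `&` _ = set0); last first.
    apply/seteqP; split => w // [_ [_]]; rewrite /= big_nil => h; lra.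
  by rewrite measure0 mulr0.
have u' : uniq ((j :: ks) ++ js).
  by rewrite -(perm_uniq (permEl (perm_catCA ks [:: j] js))).
have jks : j \notin ks.
  by move: u; rewrite cat_uniq /= => /and3P[_ /norP[jks _] _].
have neq i : i \in ks -> (i == j) = false.
  by move=> iks; apply/negbTE; apply: contraNneq jks => <-.
pose b1 i := if i == j then true else b i.
pose b0 i := if i == j then false else b i.
have E : Cyl beta ks b `&` Cnd c beta (j :: js) t =
  (Cyl beta (j :: ks) b1 `&` Cnd c beta js (t - c j)) `|`
  (Cyl beta (j :: ks) b0 `&` Cnd c beta js t).
  apply/seteqP; split => w.
    move=> [hc [hall hsum]]; move: hsum; rewrite /= big_cons => hsum.
    have hj : [set` j :: js] j by rewrite /= mem_head.
    have [h0|h1] := hall j hj.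
      right; split.
        move=> i /=; rewrite inE => /orP[/eqP->|iks]; first by rewrite /b0 eqxx h0.
        by rewrite /b0 neq //; exact: hc.
      split; first by move=> i hi; apply: hall; rewrite /= inE hi orbT.
      by move: hsum; rewrite h0 mulr0 add0r.
    left; split.
      move=> i /=; rewrite inE => /orP[/eqP->|iks]; first by rewrite /b1 eqxx h1.
      by rewrite /b1 neq //; exact: hc.
    split; first by move=> i hi; apply: hall; rewrite /= inE hi orbT.
    by move: hsum; rewrite h1 mulr1 /=; lra.
  have hj : [set` j :: ks] j by rewrite /= mem_head.
  have hks i : [set` ks] i -> [set` j :: ks] i by move=> /= iks; rewrite inE iks orbT.
  move=> [[hc [hall hsum]]|[hc [hall hsum]]].
    have h1 : beta j w = 1 by rewrite (hc j hj) /b1 eqxx.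
    split.
      by move=> i iks /=; rewrite (hc i (hks i iks)) /b1 neq.
    split.
      by move=> i /=; rewrite inE => /orP[/eqP->|ijs]; [right|apply: hall].
    by rewrite /= big_cons h1 mulr1; move: hsum => /=; lra.
  have h0 : beta j w = 0 by rewrite (hc j hj) /b0 eqxx.
  split.
    by move=> i iks /=; rewrite (hc i (hks i iks)) /b0 neq.
  split.
    by move=> i /=; rewrite inE => /orP[/eqP->|ijs]; [left|apply: hall].
  by rewrite /= big_cons h0 mulr0 add0r.
rewrite E measureU; first last.
- apply/seteqP; split => w // [[h1 _] [h0 _]].
  have hj : [set` j :: ks] j by rewrite /= mem_head.
  have := h1 j hj; have := h0 j hj; rewrite /b1 /b0 /= eqxx => ->; move/eqP.
  by rewrite /= eq_sym oner_eq0.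
- by apply: measurableI; [exact: mCyl|exact: mCnd].
- by apply: measurableI; [exact: mCyl|exact: mCnd].
apply: (@eq_trans _ _ ((\prod_(k <- j :: ks) wt p (b1 k) * Qf p (map c js) (t - c j))%:E
   + (\prod_(k <- j :: ks) wt p (b0 k) * Qf p (map c js) t)%:E)).
  by congr (_ + _); [exact: IH|exact: IH].
rewrite /= -EFinD; congr (_%:E).
rewrite !big_cons /b1 /b0 !eqxx.
rewrite (@eq_big_seq _ _ _ _ _ (fun k => wt p (if k == j then true else b k))
  (fun k => wt p (b k))); last by move=> k kks; rewrite neq.
rewrite (@eq_big_seq _ _ _ _ _ (fun k => wt p (if k == j then false else b k))
  (fun k => wt p (b k))); last by move=> k kks; rewrite neq.
rewrite /wt; ring.
Qed.

Lemma cvgn_cauchyP (R : realType) (u : R ^nat) :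
  cvgn u <-> forall k : nat, exists N, forall m, (N <= m)%N ->
    `|u N - u m| < k.+1%:R^-1.
Proof.
split.
  move=> /cvg_cauchy /cauchyP hc k.
  have e0 : 0 < k.+1%:R^-1 / 2 :> R by rewrite divr_gt0 // invr_gt0 ltr0n.
  have [x [N _ hN]] := hc _ e0.
  exists N => m Nm.
  have h1 := hN N (leqnn N); have h2 := hN m Nm.
  rewrite -ball_normE /= in h1 h2.
  rewrite (_ : u N - u m = (x - u m) - (x - u N)); last by ring.
  apply: (le_lt_trans (ler_normB _ _)).
  by rewrite [k.+1%:R^-1]splitr; apply: ltrD.
move=> h; apply/cauchy_cvgP/cauchyP => e e0.
pose k := Num.truncn e^-1.
have hk : k.+1%:R^-1 < e.
  by rewrite -[e]invrK ltf_pV2 ?posrE ?invr_gt0 ?ltr0n //; exact: truncnS_gt.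
have [N hN] := h k.
exists (u N); exists N => // m Nm /=.
rewrite -ball_normE /=; exact: lt_trans (hN m Nm) hk.
Qed.

Lemma mseries (R : realType) d (T : measurableType d) (beta : nat -> T -> R)
  (c : nat -> R) N :
  (forall i, measurable_fun setT (beta i)) ->
  measurable_fun setT (fun w => series (fun i => c i * beta i w) N).
Proof.
move=> mb; rewrite /series /=; apply: measurable_sum => j.
exact: measurable_realfun.measurable_funM.
Qed.

Lemma mlt (R : realType) d (T : measurableType d) (f : T -> R) r :
  measurable_fun setT f -> measurable [set w | f w < r].
Proof.
move=> mf; rewrite (_ : [set w | f w < r] = ~` [set w | r <= f w]).
  exact/measurableC/mle.
by apply/seteqP; split => w /=; rewrite ltNge => /negP.
Qed.

Lemma mS (R : realType) d (T : measurableType d) (beta : nat -> T -> R)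
  (c : nat -> R) :
  (forall i, measurable_fun setT (beta i)) ->
  measurable_fun setT (S_gamma c beta).
Proof.
move=> mb.
pose s N w := series (fun i => c i * beta i w) N.
have ms N : measurable_fun setT (s N) by exact: mseries.
pose C := [set w | cvgn (s ^~ w)].
have CE : C = \bigcap_k \bigcup_N \bigcap_(m in [set m | (N <= m)%N])
    [set w | `|s N w - s m w| < k.+1%:R^-1].
  apply/seteqP; split => w.
    by move=> /cvgn_cauchyP h k _; have [N hN] := h k; exists N => // m /hN.
  move=> h; apply/cvgn_cauchyP => k; have [N _ hN] := h k I.
  by exists N => m Nm; exact: hN.
have mC : measurable C.
  rewrite CE; apply: bigcapT_measurable => k; apply: bigcupT_measurable => N.
  apply: bigcap_measurableType => m _; apply: mlt.
  apply: measurableT_comp; first exact: measurable_realfun.normr_measurable.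
  exact: measurable_realfun.measurable_funB.
rewrite -(setUv C); apply/measurable_funU => //; first exact: measurableC.
split.
  apply: (@measurable_realfun.measurable_fun_cvg _ _ _ _ s) => //.
    by move=> m; exact: measurable_funS (ms m).
apply: (@eq_measurable_fun _ _ _ _ _ (cst point)); last exact: measurable_cst.
move=> w; rewrite inE => nC /=; apply/esym.
rewrite /S_gamma /lim /lim_in getPN // => l hl; apply: nC.
by apply: cvgP hl.
Qed.

Lemma stake_facts (R : realType) (c : nat -> R) : stake_seq c ->
  [/\ 0 < c 0, (forall N, series c N <= 1) & (forall i, c i <= c 0)].
Proof.
move=> [c0 [cdec cs]].
have cle i : c i <= c 0 by elim: i => // i IH; exact: le_trans (cdec i) IH.
have nd : nondecreasing_seq (series c).
  by apply: nondecreasing_series => n _ _; exact: c0.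
have L : limn (series c) = 1 by apply: cvg_lim.
split => //.
  rewrite lt_neqAle c0 andbT; apply/negP => /eqP c00.
  have sc : series c = fun=> 0.
    apply/funext => n; rewrite /series /=; apply: big1 => i _.
    by apply/eqP; rewrite eq_le c0 andbT c00 cle.
  move: L; rewrite sc lim_cst // => L01.
  by move: (@oner_neq0 R); rewrite -L01 eqxx.
move=> N; rewrite -L; apply: nondecreasing_cvgn_le => //.
by apply/cvg_ex; exists 1.
Qed.

Lemma Cyl0 (R : realType) (T : Type) (beta : nat -> T -> R) b :
  Cyl beta [::] b = setT.
Proof. by apply/seteqP; split => // w _ i; rewrite /= in_nil. Qed.

Lemma PnD (R : realType) d (T : measurableType d) (P : probability T R) p
  (beta : nat -> T -> R) : bernoulli_seq P p beta ->
  P (~` \bigcap_i [set w | beta i w = 0 \/ beta i w = 1]) = 0%E.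
Proof.
move=> hB; have [mb _] := hB.
have mX i : measurable [set w | beta i w = 0 \/ beta i w = 1].
  by apply: measurableU; exact: (mpre (mb i) (measurable_set1 _)).
have Xi i : P (~` [set w | beta i w = 0 \/ beta i w = 1]) = 0%E.
  rewrite probability_setC //.
  have := @bridge R d T P p beta (fun=> 0) hB [:: i] [::] xpred0 0 isT.
  rewrite Cyl0 setTI.
  rewrite (_ : Cnd _ _ _ _ = [set w | beta i w = 0 \/ beta i w = 1]).
    move=> ->; rewrite /= subr0 lexx big_nil mul1r mulr1.
    have -> : p + (1 - p) * 1 = 1 by ring.
    by rewrite EFinN subee.
  apply/seteqP; split => w.
    by move=> [h _]; apply: h; rewrite /= mem_head.
  move=> h; split; last by rewrite /= big_cons big_nil mul0r addr0.
  by move=> j /=; rewrite inE => /eqP ->.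
apply/eqP; rewrite eq_le measure_ge0 andbT setC_bigcap.
have mF n : measurable (~` [set w | beta n w = 0 \/ beta n w = 1]).
  exact: measurableC.
have mU : measurable (\bigcup_n ~` [set w | beta n w = 0 \/ beta n w = 1]).
  exact: bigcupT_measurable.
have := measure_function.measure_sigma_subadditive P mF mU
  (@subset_refl _ _).
move/le_trans; apply.
by rewrite eseries0 // => i _ _; exact: Xi.
Qed.

Lemma Qbound (R : realType) (p : R) (c : nat -> R) n t :
  0 <= p -> p <= 1/2 -> (forall i, 0 <= c i) ->
  \sum_(i <- iota 1 n) c i < t + t ->
  Qf p (map c (index_iota 0 n.+1)) t <= p + (1 - p) * p.
Proof.
move=> p0 p2 c0 hs.
have p01 : 0 <= p <= 1 by apply/andP; split; lra.
rewrite /index_iota subn0 /=.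
have /andP[_ Q1] := @Qf_bnd R p (map c (iota 1 n)) (t - c 0) p01.
have Q2 := @Qf_main R p (map c (iota 1 n)) p0 p2.
have Hall : all (fun x => 0 <= x) (map c (iota 1 n)).
  by apply/allP => x /mapP[i _ ->].
have Q3 := Q2 Hall t t (lexx t) ltac:(by rewrite big_map).
have Q4 : Qf p (map c (iota 1 n)) t <= p by nra.
nra.
Qed.

Lemma upper (R : realType) d (T : measurableType d) (P : probability T R) p
  (beta : nat -> T -> R) (c : nat -> R) :
  0 <= p -> p <= 1/2 -> bernoulli_seq P p beta -> stake_seq c ->
  (P [set w | (1/2 <= S_gamma c beta w)%R] <= (p + (1 - p) * p)%:E)%E.
Proof.
move=> p0 p2 hB hc; have [mb _] := hB.
have [c0 sle cle] := stake_facts hc; have cge0 := hc.1.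
pose D := \bigcap_i [set w | beta i w = 0 \/ beta i w = 1].
have mD : measurable D.
  apply: bigcapT_measurable => i.
  by apply: measurableU; exact: (mpre (mb i) (measurable_set1 _)).
have nD := PnD hB.
pose th := 1/2 - c 0 / 4.
pose s N w := series (fun i => c i * beta i w) N.
pose F N := D `&` [set w | th <= s N w].
have mF N : measurable (F N) by apply: measurableI => //; exact/mle/mseries.
have ndD w : D w -> {homo s ^~ w : n m / (n <= m)%N >-> n <= m}.
  move=> Dw; apply: nondecreasing_series => n _ _.
  by have [->|->] := Dw n I; rewrite ?mulr0 ?mulr1.
have ndF : nondecreasing_seq F.
  move=> n m nm; apply/subsetPset => w [Dw h]; split => //.
  exact: le_trans h (ndD w Dw n m nm).
pose A := [set w | 1/2 <= S_gamma c beta w].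
have mA : measurable A by exact/mle/mS.
have AD : A `&` D `<=` \bigcup_N F N.
  move=> w [hA Dw].
  have cv : cvgn (s ^~ w).
    apply: nondecreasing_is_cvgn; first exact: ndD.
    exists 1 => _ [n _ <-]; apply: le_trans (sle n).
    rewrite /s /series /=; apply: ler_sum => i _.
    by have [->|->] := Dw i I; rewrite ?mulr0 ?mulr1.
  have [[N hN]|nN] := pselect (exists N, th <= s N w); first by exists N.
  exfalso.
  have : limn (s ^~ w) <= th.
    apply: (@limr_le _ _ eventually_filter) => //; apply: nearW => N; rewrite leNgt; apply/negP => h.
    by apply: nN; exists N; exact: ltW.
  move=> hle; have h' : S_gamma c beta w <= th := hle.
  rewrite /A /= in hA; rewrite /th in h'; lra.
have mAD' : measurable (A `&` D) by exact: measurableI.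
have mAD : measurable (A `&` D `|` ~` D).
  by apply: measurableU => //; exact: measurableC.
have h1 : (P A <= P (A `&` D) + P (~` D))%E.
  apply: le_trans (measureU2 _ _ _) => //; last exact: measurableC.
  rewrite le_measure ?inE //.
  by move=> w Aw; have [Dw|nDw] := pselect (D w); [left|right].
rewrite nD adde0 in h1; apply: le_trans h1 _.
have mU : measurable (\bigcup_N F N) by exact: bigcupT_measurable.
apply: le_trans (_ : (P (\bigcup_N F N) <= _)%E).
  by rewrite le_measure ?inE //; exact: measurableI.
have := nondecreasing_cvg_mu (mu := P) mF mU ndF => /cvg_lim <- //.
apply: lime_le; first by apply/cvg_ex; eexists; exact: nondecreasing_cvg_mu.
exists 1%N => // N /= N1.
apply: le_trans (_ : (P (Cnd c beta (index_iota 0 N) th) <= _)%E).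
  have mC : measurable (Cnd c beta (index_iota 0 N) th) by exact: mCnd.
  rewrite le_measure ?inE //.
  move=> w [Dw h]; split; last exact: h.
  by move=> i _; exact: Dw.
have := @bridge R d T P p beta c hB (index_iota 0 N) [::] xpred0 th (iota_uniq _ _).
rewrite Cyl0 setTI => ->; rewrite big_nil mul1r lee_fin.
case: N N1 => // n _; apply: Qbound => //.
have := sle n.+1; rewrite /series /= /index_iota subn0 /= big_cons.
rewrite /th; lra.
Qed.

Lemma bpE (R : realType) i :
  bold_play (1 / 2 : R) i = if (i < 2)%N then 1 / 2 else 0.
Proof.
rewrite /bold_play.
have -> : Num.truncn (1 / 2 : R)^-1 = 2%N.
  apply: truncn_def; rewrite div1r invrK; apply/andP; split => //.
  by rewrite ltr_nat.
by rewrite div1r.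
Qed.

Lemma sum2 (R : realType) (f : nat -> R) m : (forall i, (2 <= i)%N -> f i = 0) ->
  series f m.+2 = f 0%N + f 1%N.
Proof.
move=> f0; rewrite /series /= big_nat_recl // big_nat_recl //.
rewrite big1 ?addr0 // => i _; exact: f0.
Qed.

Unset Implicit Arguments.

Theorem corollary18 (R : realType) (d : measure_display) (T : measurableType d)
  (P : probability T R) (p : R) (beta : nat -> T -> R) :
  0 <= p -> p <= 1 / 2 -> bernoulli_seq P p beta ->
  pi_val P beta (1 / 2) = (p + (1 - p) * p)%:E /\
  stake_seq (bold_play (1 / 2 : R)) /\
  P [set w | 1 / 2 <= S_gamma (bold_play (1 / 2 : R)) beta w] = pi_val P beta (1 / 2) /\
  (forall i, bold_play (1 / 2 : R) i = if (i < 2)%N then 1 / 2 else 0).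
Proof.
move=> p0 p2 hB; have [mb _] := hB.
pose bp := bold_play (1 / 2 : R).
have bp0 i : (2 <= i)%N -> bp i = 0.
  by move=> hi; rewrite /bp bpE ltnNge hi.
have sbp : stake_seq bp.
  split; first by move=> i; rewrite /bp bpE; case: ifP => _; lra.
  split.
    move=> i; rewrite /bp !bpE.
    by case: i => [|[|i]] //=; lra.
  apply: cvg_near_cst; exists 2%N => // n /= n2.
  have -> : n = (n - 2).+2 by rewrite -addn2 subnK.
  by rewrite sum2 // /bp !bpE /=; lra.
have SE w : S_gamma bp beta w = 1 / 2 * beta 0%N w + 1 / 2 * beta 1%N w.
  rewrite /S_gamma; apply: lim_near_cst => //; exists 2%N => // n /= n2.
  have -> : n = (n - 2).+2 by rewrite -addn2 subnK.
  rewrite sum2; first by rewrite /bp !bpE.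
  by move=> i hi; rewrite bp0 // mul0r.
have U := @upper R d T P p beta _ p0 p2 hB.
have L : ((p + (1 - p) * p)%:E <= P [set w | (1 / 2 <= S_gamma bp beta w)%R])%E.
  have mC : measurable (Cnd bp beta [:: 0%N; 1%N] (1 / 2)) by exact: mCnd.
  have mA : measurable [set w | 1 / 2 <= S_gamma bp beta w].
    by apply: mle; exact: mS.
  apply: le_trans (_ : (P (Cnd bp beta [:: 0%N; 1%N] (1 / 2)) <= _)%E).
    have := @bridge R d T P p beta bp hB [:: 0%N; 1%N] [::] xpred0 (1 / 2) isT.
    rewrite Cyl0 setTI => ->; rewrite big_nil mul1r lee_fin /= /bp !bpE /=.
    rewrite ifT; last lra.
    rewrite ifT; last lra.
    rewrite ifF; last by apply/negbTE; rewrite -ltNge; lra.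
    lra.
  rewrite le_measure ?inE //.
  move=> w [_ h]; rewrite /= SE; move: h; rewrite /= !big_cons big_nil addr0.
  by rewrite /bp !bpE.
have E : P [set w | 1 / 2 <= S_gamma bp beta w] = (p + (1 - p) * p)%:E.
  by apply/le_anti/andP; split => //; exact: U.
have piE : pi_val P beta (1 / 2) = (p + (1 - p) * p)%:E.
  apply/le_anti/andP; split.
    by apply: ge_ereal_sup => _ [c hc <-]; exact: U.
  by rewrite -E; apply: ereal_sup_ubound; exists bp.
split => //; split => //; split; first by rewrite piE.
exact: bpE.
Qed.
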